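(* Let $\mathcal{H}$ and $\mathcal{G}$ be Sperner hypergraphs on the same vertex set $V$ with $\mathcal{G}\subseteq Tr(\mathcal{H})$ and $\mathcal{H}\subseteq Tr(\mathcal{G})$, and let $k\in\mathbb{N}$. Consider the following procedure. (1) For each $k$-trace $(T,S)$ on $V$ with $(T,S)\notin\mathrm{traces}_k(\mathcal{H})$: if there exists $E\in Tr(\mathcal{G})$ realizing $(T,S)$, return such an $E$. (2) For each $E\in\mathrm{ext}_k(\mathcal{H})$ that is not contained in any hyperedge of $\mathcal{H}$: if $E\in Tr(\mathcal{G})$, return $E$. (3) Return ''Yes''. Then this procedure returns ''Yes'' if $Tr(\mathcal{G})=\mathcal{H}$, and otherwise returns a set $E\in Tr(\mathcal{G})\setminus\mathcal{H}$.
   Context: A hypergraph on $V$ is a family of subsets (hyperedges) of $V$; it is Sperner if no hyperedge contains another. A transversal meets every hyperedge; $Tr(\cdot)$ denotes the hypergraph of inclusion-minimal transversals. A $k$-trace on $V$ is a pair $(T,S)$ with $S\subseteq V$, $|S|=k$, $T\subseteq S$; a set $F$ realizes it if $F\cap S=T$. $\mathrm{traces}_k(F)$ is the set of $k$-traces realized by $F$, and $\mathrm{traces}_k(\mathcal{H})=\bigcup_{F\in\mathcal{H}}\mathrm{traces}_k(F)$. $\mathrm{ext}_k(\mathcal{H})$ is the hypergraph on $V$ consisting of all $E\subseteq V$ with $\mathrm{traces}_k(E)\subseteq\mathrm{traces}_k(\mathcal{H})$. *)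

(* Defs.v *)
From mathcomp Require Import all_boot.
Set Implicit Arguments. Unset Strict Implicit. Unset Printing Implicit Defensive.

Section Hyper.
Variable V : finType.
Notation hyp := {set {set V}}.

Definition Sperner (H : hyp) : Prop :=
  forall E F, E \in H -> F \in H -> E \subset F -> E = F.

Definition transversal (H : hyp) (E : {set V}) : bool :=
  [forall F in H, E :&: F != set0].

Definition Tr (H : hyp) : hyp := [set E | minset (transversal H) E].

Definition ktrace (k : nat) (p : {set V} * {set V}) : bool :=
  (#|p.2| == k) && (p.1 \subset p.2).

Definition realizes (F : {set V}) (p : {set V} * {set V}) : bool :=
  F :&: p.2 == p.1.

Definition traces (k : nat) (F : {set V}) : {set {set V} * {set V}} :=
  [set p | ktrace k p && realizes F p].

Definition tracesH (k : nat) (H : hyp) : {set {set V} * {set V}} :=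
  \bigcup_(F in H) traces k F.

Definition ext (k : nat) (H : hyp) : hyp :=
  [set E | traces k E \subset tracesH k H].

(* Possible outputs of the procedure: Some E = "return E", None = "Yes".
   Step (1) iterates over the k-traces in an unspecified order and returns an
   unspecified realizer; step (2) likewise; all choices are allowed. *)
Inductive procedure_output (H G : hyp) (k : nat) : option {set V} -> Prop :=
| Step1_return (p : {set V} * {set V}) (E : {set V}) :
    ktrace k p -> p \notin tracesH k H -> E \in Tr G -> realizes E p ->
    procedure_output H G k (Some E)
| Step2_return (E : {set V}) :
    (forall p E', ktrace k p -> p \notin tracesH k H -> E' \in Tr G ->
        ~~ realizes E' p) ->
    E \in ext k H -> (forall F, F \in H -> ~~ (E \subset F)) -> E \in Tr G ->
    procedure_output H G k (Some E)
| Step3_yes :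
    (forall p E', ktrace k p -> p \notin tracesH k H -> E' \in Tr G ->
        ~~ realizes E' p) ->
    (forall E, E \in ext k H -> (forall F, F \in H -> ~~ (E \subset F)) ->
        E \notin Tr G) ->
    procedure_output H G k None.
End Hyper.

(* Main.v *)
Require Import Defs.
From mathcomp Require Import all_boot.

Lemma TrG_sub (V : finType) (G : {set {set V}}) E F :
  E \in Tr G -> F \in Tr G -> E \subset F -> E = F.
Proof.
rewrite !inE => /minsetP [tE _] /minsetP [_ mF] sEF.
exact: mF.
Qed.

Theorem theorem2 (V : finType) (H G : {set {set V}}) (k : nat) :
  Sperner H -> Sperner G -> G \subset Tr H -> H \subset Tr G ->
  (exists r, procedure_output H G k r) /\
  (forall r, procedure_output H G k r ->
     (r = None <-> Tr G = H) /\
     (forall E, r = Some E -> E \in Tr G :\: H)).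
Proof.
move=> _ _ _ HsubG.
have someE : forall E, E \in Tr G :\: H -> Tr G <> H.
  by move=> E; rewrite inE => /andP [nEH EG] eq; rewrite eq in EG; rewrite EG in nEH.
split.
  case: (boolP [exists p : {set V} * {set V}, exists E : {set V},
     [&& ktrace k p, p \notin tracesH k H, E \in Tr G & realizes E p]]).
    move=> /existsP [p /existsP [E /and4P [a b c d]]].
    by exists (Some E); apply: (Step1_return (p:=p)).
  rewrite negb_exists => /forallP C1.
  have C1' : forall p E', ktrace k p -> p \notin tracesH k H -> E' \in Tr G ->
        ~~ realizes E' p.
    move=> p E' a b c; apply/negP => d.
    by move: (C1 p); rewrite negb_exists => /forallP /(_ E'); rewrite a b c d.
  case: (boolP [exists E : {set V}, [&& E \in ext k H,
          [forall F in H, ~~ (E \subset F)] & E \in Tr G]]).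
    move=> /existsP [E /and3P [a /forall_inP b c]].
    by exists (Some E); apply: Step2_return.
  rewrite negb_exists => /forallP C2.
  exists None; apply: Step3_yes => // E a b; apply/negP => c.
  move: (C2 E); rewrite a c /= andbT => /negP; apply; apply/forall_inP => F.
  exact: b.
move=> r; case => [p E a b c d | E C1 a b c | C1 C2].
- have EE : E \in Tr G :\: H.
    rewrite inE c andbT; apply/negP => EH; move/negP: b; apply.
    apply/bigcupP; exists E => //; by rewrite inE a d.
  split; last by move=> E0 [<-].
  by split => // /(someE _ EE).
- have EE : E \in Tr G :\: H.
    rewrite inE c andbT; apply/negP => EH.
    by move: (b E EH); rewrite subxx.
  split; last by move=> E0 [<-].
  by split => // /(someE _ EE).
- split; last by [].
  split => // _; apply/eqP; rewrite eqEsubset HsubG andbT.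
  apply/subsetP => E EG; apply/negPn/negP => nEH.
  have Eext : E \in ext k H.
    rewrite inE; apply/subsetP => p pE; apply/negPn/negP => np.
    move: pE; rewrite inE => /andP [kp rp].
    by move: (C1 p E kp np EG); rewrite rp.
  case: (boolP [exists F in H, E \subset F]).
    move=> /exists_inP [F FH sEF].
    have eq := @TrG_sub V G E F EG (subsetP HsubG F FH) sEF.
    by rewrite eq FH in nEH.
  rewrite negb_exists_in => /forall_inP nb.
  by move: (C2 E Eext nb); rewrite EG.
Qed.
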